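(* In the setting described in the context, let $\sigma_w,\sigma_v$ be real scalars, suppose $W=\rho I$ for some $\rho>0$, and consider $$\tilde\Sigma_\tau(s)=R^T\big(sI+L_{e,s}^\tau RWR^T\big)^{-1}\begin{bmatrix}\sigma_wD_\tau^TE^{-1/2} & -\sigma_vL_{e,s}^\tau RW^{1/2}\end{bmatrix}.$$ Then $$\|\tilde\Sigma_\tau\|_\infty^2=\frac{1}{\rho^2}\sigma_w^2\,\bar\sigma\big(R^T(RR^TL_{e,s}^\tau RR^T)^{-1}R\big)+\frac{1}{\rho}\sigma_v^2.$$
   Context: Let $\mathcal G$ be an undirected, connected graph without self-loops, with node set $\{1,\dots,n\}$ ($n\ge2$) and edge set $\mathcal E$, $m=|\mathcal E|$. Give each edge an arbitrary orientation; the incidence matrix $D\in\mathbb R^{n\times m}$ has $D_{il}=1$ if node $i$ is the initial node of edge $l$, $-1$ if it is the terminal node, and $0$ otherwise. Fix a spanning tree $\mathcal G_\tau$ and order the edges so the first $n-1$ are tree edges; write $D=[D_\tau\ D_c]$ with $D_\tau\in\mathbb R^{n\times(n-1)}$. Set $T_\tau^c=(D_\tau^TD_\tau)^{-1}D_\tau^TD_c$ and $R=[I_{n-1}\ T_\tau^c]\in\mathbb R^{(n-1)\times m}$. $W\in\mathbb R^{m\times m}$ is the (diagonal, positive) edge-weight matrix and $E=\mathrm{diag}(\epsilon_1,\dots,\epsilon_n)$, $\epsilon_i>0$, is the time-scale matrix; powers of diagonal matrices are taken entrywise. Define $L_{e,s}^\tau=D_\tau^TE^{-1}D_\tau$. For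 a stable transfer matrix $\Phi(s)$, $\|\Phi\|_\infty=\sup_{\omega\in\mathbb R}\bar\sigma(\Phi(j\omega))$ where $\bar\sigma$ is the largest singular value. *)

(* Defs.v *)
From HB Require Import structures.
From mathcomp Require Import all_boot all_order all_algebra.
From mathcomp Require Import complex.
From mathcomp Require Import classical_sets reals.
Set Implicit Arguments. Unset Strict Implicit. Unset Printing Implicit Defensive.
Import Order.TTheory GRing.Theory Num.Theory.
Local Open Scope ring_scope.
Local Open Scope classical_set_scope.

Section Defs.
Variable R : realType.

Definition cmx (p q : nat) (A : 'M[R]_(p, q)) : 'M[R[i]]_(p, q) :=
  map_mx (fun x => (x%:C)%C) A.

Definition adjmx (p q : nat) (A : 'M[R[i]]_(p, q)) : 'M[R[i]]_(q, p) :=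
  map_mx (@conjc R) A^T.

(* largest singular value: square root of the largest eigenvalue of A^H A
   (whose eigenvalues are real and nonnegative) *)
Definition sigma_max (p q : nat) (A : 'M[R[i]]_(p, q)) : R :=
  Num.sqrt (sup [set x : R | eigenvalue (adjmx A *m A) (x%:C)%C]).

Definition hinf_set (p q : nat) (Phi : R[i] -> 'M[R[i]]_(p, q)) : set R :=
  [set sigma_max (Phi ((0 +i* w)%C)) | w in [set: R]].

Definition hinf_norm (p q : nat) (Phi : R[i] -> 'M[R[i]]_(p, q)) : R :=
  sup (hinf_set Phi).

Definition incidence (n m : nat) (src tgt : 'I_m -> 'I_n) : 'M[R]_(n, m) :=
  \matrix_(i, l) ((i == src l)%:R - (i == tgt l)%:R).

Definition diagv (k : nat) (d : 'I_k -> R) : 'M[R]_k := diag_mx (\row_i d i).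

End Defs.

(* undirected adjacency relation induced by the first nt edges
   (the tree edges) *)
Definition tree_rel (n nt c : nat) (src tgt : 'I_(nt + c) -> 'I_n) : rel 'I_n :=
  fun i j => [exists l : 'I_nt,
    ((src (lshift c l) == i) && (tgt (lshift c l) == j)) ||
    ((src (lshift c l) == j) && (tgt (lshift c l) == i))].

(* the first nt edges form a spanning tree: they connect all nodes
   (with nt = n - 1 edges on n nodes this is equivalent to being a tree) *)
Definition spanning_tree (n nt c : nat) (src tgt : 'I_(nt + c) -> 'I_n) : Prop :=
  forall i j : 'I_n, connect (tree_rel src tgt) i j.

(* Main.v *)
Require Import Defs.
From HB Require Import structures.
From mathcomp Require Import all_boot all_order all_algebra.
From mathcomp Require Import complex.
From mathcomp Require Import classical_sets reals.
From mathcomp Require Import boolp zify ring.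
Import Order.TTheory GRing.Theory Num.Theory.
Local Open Scope ring_scope.
Set Implicit Arguments. Unset Strict Implicit.

Section Adj.
Variable R : realType.
Local Notation C := (R[i]).

Lemma adjmxM p q r (A : 'M[C]_(p,q)) (B : 'M_(q,r)) :
  adjmx (A *m B) = adjmx B *m adjmx A.
Proof. by rewrite /adjmx trmx_mul map_mxM. Qed.

Lemma adjmxK p q (A : 'M[C]_(p,q)) : adjmx (adjmx A) = A.
Proof. by apply/matrixP => i j; rewrite !mxE conjcK. Qed.

Lemma adjmxD p q (A B : 'M[C]_(p,q)) : adjmx (A + B) = adjmx A + adjmx B.
Proof. by apply/matrixP => i j; rewrite !mxE rmorphD. Qed.

Lemma adjmxN p q (A : 'M[C]_(p,q)) : adjmx (- A) = - adjmx A.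
Proof. by apply/matrixP => i j; rewrite !mxE rmorphN. Qed.

Lemma adjmxZ p q a (A : 'M[C]_(p,q)) : adjmx (a *: A) = (a^*)%C *: adjmx A.
Proof. by apply/matrixP => i j; rewrite !mxE rmorphM. Qed.

Lemma adjmx1 p : adjmx (1%:M : 'M[C]_p) = 1%:M.
Proof. by apply/matrixP => i j; rewrite !mxE rmorphMn rmorph1 eq_sym. Qed.

Lemma adjmx_cmx p q (A : 'M[R]_(p,q)) : adjmx (cmx A) = cmx A^T.
Proof. by apply/matrixP => i j; rewrite !mxE conjc_real. Qed.

Lemma adjmx_inv p (A : 'M[C]_p) : adjmx (invmx A) = invmx (adjmx A).
Proof. by rewrite /adjmx trmx_inv map_invmx. Qed.

Lemma cmxM p q r (A : 'M[R]_(p,q)) (B : 'M_(q,r)) : cmx (A *m B) = cmx A *m cmx B.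
Proof. exact: map_mxM. Qed.
Lemma cmxD p q (A B : 'M[R]_(p,q)) : cmx (A + B) = cmx A + cmx B.
Proof. exact: map_mxD. Qed.
Lemma cmxZ p q a (A : 'M[R]_(p,q)) : cmx (a *: A) = (a%:C)%C *: cmx A.
Proof. exact: map_mxZ. Qed.
Lemma cmx_inv p (A : 'M[R]_p) : cmx (invmx A) = invmx (cmx A).
Proof. exact: map_invmx. Qed.
Lemma cmx_unit p (A : 'M[R]_p) : (cmx A \in unitmx) = (A \in unitmx).
Proof. exact: map_unitmx. Qed.
Lemma cmx_tr p q (A : 'M[R]_(p,q)) : cmx A^T = (cmx A)^T.
Proof. by rewrite /cmx map_trmx. Qed.

Definition nrm k (u : 'rV[C]_k) := (u *m adjmx u) 0 0.
Arguments nrm {k}.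

Lemma nrm_sum k (u : 'rV[C]_k) : nrm u = \sum_j u 0 j * ((u 0 j)^*)%C.
Proof. by rewrite /nrm mxE; apply: eq_bigr => j _; rewrite !mxE. Qed.

Lemma nrm_ge0 k (u : 'rV[C]_k) : 0 <= nrm u.
Proof. by rewrite nrm_sum; apply: sumr_ge0 => j _; exact: mul_conjC_ge0. Qed.

Lemma nrm_eq0 k (u : 'rV[C]_k) : nrm u = 0 -> u = 0.
Proof.
rewrite nrm_sum => H; apply/rowP => j; rewrite mxE.
have := @psumr_eq0P _ _ predT _ (fun j _ => mul_conjC_ge0 (u 0 j)) H j isT.
by move/eqP; rewrite mulf_eq0 conjc_eq0 orbb => /eqP.
Qed.

Lemma nrm_gt0 k (u : 'rV[C]_k) : u != 0 -> 0 < nrm u.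
Proof.
move=> nz; rewrite lt_def nrm_ge0 andbT; apply/eqP => /nrm_eq0 H.
by rewrite H eqxx in nz.
Qed.

Lemma qf_AAH k p (u : 'rV[C]_k) (A : 'M[C]_(k,p)) :
  (u *m (A *m adjmx A) *m adjmx u) 0 0 = nrm (u *m A).
Proof. by rewrite /nrm adjmxM !mulmxA. Qed.

Lemma eigen_qf k (G : 'M[C]_k) v a : v *m G = a *: v ->
  (v *m G *m adjmx v) 0 0 = a * nrm v.
Proof. by move=> H; rewrite H -scalemxAl mxE. Qed.


Lemma herm_spec k (G : 'M[C]_k) : adjmx G = G ->
  exists (P : 'M[C]_k) (d : 'rV[R]_k),
  [/\ P *m adjmx P = 1%:M, adjmx P *m P = 1%:M &
      G = adjmx P *m diag_mx (cmx d) *m P].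
Proof.
move=> HG.
have Gh : G \is hermsymmx.
  apply/is_hermitianmxP; rewrite expr0 scale1r.
  by rewrite -[X in _ = X]/(adjmx G) HG.
have /hermitian_normalmx /orthomx_spectralP GE := Gh.
have Pu := spectral_unitarymx G.
have Preal := hermitian_spectral_diag_real Gh.
move: GE Pu Preal.
set P := spectralmx G; set sp := spectral_diag G => GE Pu Preal.
exists P, (\row_j complex.Re (sp 0 j)).
have PPH : P *m adjmx P = 1%:M by apply/eqP; exact: Pu.
have PHP : adjmx P *m P = 1%:M.
  by rewrite -[adjmx P]/(map_mx Num.conj P^T) -invmx_unitary // mulVmx // unitarymx_unit.
split => //.
have -> : cmx (\row_j complex.Re (sp 0 j)) = sp.
  apply/rowP => j; rewrite !mxE; apply: RRe_real.
  by move/mxOverP : Preal; apply.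
by rewrite {1}GE invmx_unitary.
Qed.

Lemma qf_diag k (y : 'rV[C]_k) (e : 'rV[C]_k) :
  (y *m diag_mx e *m adjmx y) 0 0 = \sum_j e 0 j * (y 0 j * ((y 0 j)^*)%C).
Proof.
rewrite mxE; apply: eq_bigr => j _; rewrite mul_mx_diag !mxE.
by rewrite mulrAC mulrC.
Qed.

Section SpecP.
Variables (k : nat) (P : 'M[C]_k) (d : 'rV[R]_k).
Hypotheses (PPH : P *m adjmx P = 1%:M) (PHP : adjmx P *m P = 1%:M).
Let G := adjmx P *m diag_mx (cmx d) *m P.

Lemma spec_eig x : eigenvalue G (x%:C)%C -> exists i, x = d 0 i.
Proof.
move=> /eigenvalueP [v Hv vnz].
set y := v *m adjmx P.
have Hy : y *m diag_mx (cmx d) = (x%:C)%C *: y.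
  have E : v *m G *m adjmx P = y *m diag_mx (cmx d).
    by rewrite /G /y !mulmxA -(mulmxA _ P) PPH mulmx1.
  by rewrite -E Hv -scalemxAl.
have ynz : y != 0.
  apply: contra vnz => /eqP y0; apply/eqP.
  by rewrite -[v]mulmx1 -PHP mulmxA -/y y0 mul0mx.
have [i yi] : exists i, y 0 i != 0.
  apply/existsP; apply: contraR ynz => /existsPn H; apply/eqP/rowP => i.
  by move: (H i); rewrite negbK => /eqP ->; rewrite mxE.
clearbody y; exists i; have /rowP /(_ i) := Hy; rewrite mul_mx_diag !mxE.
move=> /eqP; rewrite mulrC -subr_eq0 -mulrBl mulf_eq0 (negbTE yi) orbF subr_eq0.
by move=> /eqP /complexI.
Qed.

Lemma spec_vec i : row i P *m G = ((d 0 i)%:C)%C *: row i P /\ row i P != 0.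
Proof.
have E : row i P *m adjmx P = delta_mx 0 i by rewrite rowE -mulmxA PPH mulmx1.
split.
  rewrite /G !mulmxA E rowE scalemxAl; congr (_ *m _).
  apply/matrixP => a b; rewrite mul_mx_diag !mxE (ord1 a) eqxx /=.
  by case: eqP => [->|_]; rewrite ?mulr1 ?mul1r ?mulr0 ?mul0r.
apply/eqP => H; move: E; rewrite H mul0mx => /matrixP /(_ 0 i).
by rewrite !mxE !eqxx => /eqP; rewrite eq_sym oner_eq0.
Qed.

Lemma spec_qf u lam : (forall i, d 0 i <= lam) ->
  (u *m G *m adjmx u) 0 0 <= (lam%:C)%C * nrm u.
Proof.
move=> Hl.
set y := u *m adjmx P.
have -> : u *m G *m adjmx u = y *m diag_mx (cmx d) *m adjmx y.
  by rewrite /G /y adjmxM adjmxK !mulmxA.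
have -> : nrm u = nrm y by rewrite /nrm /y adjmxM adjmxK mulmxA -(mulmxA u) PHP mulmx1.
rewrite qf_diag nrm_sum mulr_sumr; apply: ler_sum => j _.
rewrite mxE; apply: ler_wpM2r; first exact: mul_conjC_ge0.
by rewrite lecR.
Qed.

End SpecP.

Lemma sup_le_ub0 (S : set R) V : (forall x, S x -> x <= V) -> 0 <= V -> sup S <= V.
Proof.
move=> ub V0; have [[x Sx]|S0] := pselect (exists x, S x).
  by apply: ge_sup; [exists x | apply/ubP].
rewrite (_ : S = set0) ?sup0 //; apply/seteqP; split => y // Sy.
by exfalso; apply: S0; exists y.
Qed.

Lemma sup_max_eq (S : set R) V : (forall x, S x -> x <= V) ->
  (forall x, S x -> 0 <= x) -> (S V \/ V = 0) -> sup S = V.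
Proof.
move=> ub lb [SV|V0].
  apply/le_anti; rewrite ge_sup /=; [|by exists V|by apply/ubP].
  by apply: sup_upper_bound => //; split; [exists V | exists V; apply/ubP].
have [[x Sx]|S0] := pselect (exists x, S x).
  apply/le_anti; rewrite ge_sup /=; [|by exists x|by apply/ubP].
  rewrite V0 (le_trans (lb _ Sx)) //.
  by apply: sup_upper_bound => //; split; [exists x | exists V; apply/ubP].
rewrite V0 (_ : S = set0) ?sup0 //; apply/seteqP; split => y // Sy.
by exfalso; apply: S0; exists y.
Qed.


Lemma AHA_eig_ge0 p q (A : 'M[C]_(p,q)) x :
  eigenvalue (adjmx A *m A) (x%:C)%C -> 0 <= x.
Proof.
move=> /eigenvalueP [v Hv vnz].
have := eigen_qf Hv; have := qf_AAH v (adjmx A); rewrite adjmxK => -> E.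
have : 0 <= (x%:C)%C * nrm v by rewrite -E nrm_ge0.
by rewrite pmulr_lge0 ?nrm_gt0 // ler0c.
Qed.

Lemma AHA_eig_bound p q (A : 'M[C]_(p,q)) V x :
  (forall w, (w *m (A *m adjmx A) *m adjmx w) 0 0 <= (V%:C)%C * nrm w) ->
  0 <= V -> eigenvalue (adjmx A *m A) (x%:C)%C -> x <= V.
Proof.
move=> Hb V0 Hx; have x0 := AHA_eig_ge0 Hx.
move: Hx => /eigenvalueP [v Hv vnz].
have [->//|xnz] := eqVneq x 0.
set w := v *m adjmx A.
have Hw : w *m (A *m adjmx A) = (x%:C)%C *: w.
  by rewrite /w mulmxA -(mulmxA v) Hv -scalemxAl.
have wnz : w != 0.
  apply/eqP => w0; move: Hv; rewrite mulmxA -/w w0 mul0mx => /esym /eqP.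
  rewrite scalemx_eq0 (negbTE vnz) orbF => /eqP /complexI /eqP.
  by rewrite (negbTE xnz).
have := Hb w; rewrite (eigen_qf Hw) ler_pM2r ?nrm_gt0 //.
by rewrite lecR.
Qed.

Lemma AHA_eig_attain p q (A : 'M[C]_(p,q)) V (w : 'rV[C]_p) :
  w != 0 -> w *m (A *m adjmx A) = (V%:C)%C *: w -> V != 0 ->
  eigenvalue (adjmx A *m A) (V%:C)%C.
Proof.
move=> wnz Hw Vnz; apply/eigenvalueP; exists (w *m A).
  by rewrite mulmxA -(mulmxA w) Hw -scalemxAl.
apply/eqP => z0; move: Hw; rewrite mulmxA z0 mul0mx => /esym /eqP.
rewrite scalemx_eq0 (negbTE wnz) orbF => /eqP /complexI /eqP.
by rewrite (negbTE Vnz).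
Qed.

End Adj.

Section Gen.
Variable R : realType.
Local Notation C := (R[i]).

Lemma ker_row_free p q (X : 'M[C]_(p,q)) : (forall v : 'rV[C]_p, v *m X = 0 -> v = 0) -> row_free X.
Proof.
move=> H; rewrite -kermx_eq0; apply/eqP/row_matrixP => i.
by rewrite row0; apply: H; rewrite -row_mul mulmx_ker row0.
Qed.

Lemma XXH_unit p q (X : 'M[C]_(p,q)) : row_free X -> X *m adjmx X \in unitmx.
Proof.
move=> fX; rewrite -row_free_unit; apply: ker_row_free => v Hv.
have : nrm (v *m X) = 0 by rewrite -qf_AAH Hv mul0mx mxE.
by move/nrm_eq0/eqP; rewrite mulmx_free_eq0 // => /eqP.
Qed.

Lemma invmxM2 p (X Y : 'M[C]_p) : X \in unitmx -> Y \in unitmx ->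
  invmx (X *m Y) = invmx Y *m invmx X.
Proof.
move=> uX uY.
have E : (X *m Y) *m (invmx Y *m invmx X) = 1%:M.
  by rewrite mulmxA -(mulmxA X) mulmxV // mulmx1 mulmxV.
by rewrite -[invmx (X *m Y)]mulmx1 -E mulmxA mulVmx ?mul1mx // unitmx_mul uX uY.
Qed.

Definition qf k (u : 'rV[C]_k) (H : 'M[C]_k) := (u *m H *m adjmx u) 0 0.

Lemma qfD k (u : 'rV[C]_k) H1 H2 : qf u (H1 + H2) = qf u H1 + qf u H2.
Proof. by rewrite /qf mulmxDr mulmxDl mxE. Qed.
Lemma qfZ k (u : 'rV[C]_k) a H : qf u (a *: H) = a * qf u H.
Proof. by rewrite /qf -scalemxAr -scalemxAl mxE. Qed.
Lemma qfN k (u : 'rV[C]_k) H : qf u (- H) = - qf u H.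
Proof. by rewrite /qf mulmxN mulNmx mxE. Qed.
Lemma qfM k p (u : 'rV[C]_k) (X : 'M[C]_(k,p)) H :
  qf (u *m X) H = qf u (X *m H *m adjmx X).
Proof. by rewrite /qf adjmxM !mulmxA. Qed.
Lemma qf_psd k p (u : 'rV[C]_k) (X : 'M[C]_(k,p)) : qf u (X *m adjmx X) = nrm (u *m X).
Proof. exact: qf_AAH. Qed.
Lemma qf1 k (u : 'rV[C]_k) : qf u 1%:M = nrm u.
Proof. by rewrite /qf mulmx1. Qed.
Lemma qf_psd_ge0 k p (u : 'rV[C]_k) (X : 'M[C]_(k,p)) : 0 <= qf u (X *m adjmx X).
Proof. by rewrite qf_psd nrm_ge0. Qed.

Lemma KQK k (s r : C) (T Q Z S : 'M[C]_k) : (r^*)%C = r -> s + (s^*)%C = 0 ->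
  T *m Q = Z -> Q *m adjmx T = Z -> T *m Q *m adjmx T = S ->
  (s *: 1%:M + r *: T) *m Q *m adjmx (s *: 1%:M + r *: T)
   = (s * (s^*)%C) *: Q + (r * r) *: S.
Proof.
move=> rr ss TQ QT TQT.
rewrite adjmxD !adjmxZ adjmx1 rr.
rewrite mulmxDl !mulmxDr -!scalemxAl !mul1mx -!scalemxAr !mulmx1.
rewrite mulmxDl -!scalemxAl TQT TQ QT !scalerDr !scalerA.
have bc : (s^* * r)%C *: Z + (r * s) *: Z = 0.
  by rewrite -scalerDl (mulrC r s) -mulrDl addrC ss mul0r scale0r.
by rewrite -addrA (addrA ((s^* * r)%C *: Z)) bc add0r mulrC.
Qed.

End Gen.

Lemma ss0 (R : realType) (om : R) : (0 +i* om)%C + ((0 +i* om)^*)%C = 0 :> R[i].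
Proof. by apply/eqP; rewrite eq_complex /= addr0 subrr !eqxx. Qed.

Section Core.
Variable R : realType.
Local Notation C := (R[i]).
Variables (k p m q : nat) (Ac : 'M[C]_(k,p)) (Rc : 'M[C]_(k,m)) (Bc : 'M[C]_(k,q))
  (Lc Pc Li Pi : 'M[C]_k) (r sw2 c2 : C).
Hypotheses (k0 : (0 < k)%N) (fAc : row_free Ac) (fRc : row_free Rc)
  (rr : (r^*)%C = r) (r0 : 0 < r) (sw0 : 0 <= sw2) (c0 : 0 <= c2)
  (HLc : Lc = Ac *m adjmx Ac) (HPc : Pc = Rc *m adjmx Rc)
  (HLi : Li = invmx Lc) (HPi : Pi = invmx Pc)
  (cBB : Bc *m adjmx Bc = sw2 *: Lc + c2 *: (Lc *m Pc *m Lc)).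

Local Notation T := (Lc *m Pc).
Local Notation Q := (Pi *m Li *m Pi).
Local Notation Nc := (adjmx Rc *m Q *m Rc).
Local Notation Pm := (adjmx Rc *m Pi *m Rc).

Let uL : Lc \in unitmx.
Proof. by rewrite HLc XXH_unit. Qed.
Let uP : Pc \in unitmx.
Proof. by rewrite HPc XXH_unit. Qed.
Let LcH : adjmx Lc = Lc.
Proof. by rewrite HLc adjmxM adjmxK. Qed.
Let PcH : adjmx Pc = Pc.
Proof. by rewrite HPc adjmxM adjmxK. Qed.
Let LiH : adjmx Li = Li.
Proof. by rewrite HLi adjmx_inv LcH. Qed.
Let PiH : adjmx Pi = Pi.
Proof. by rewrite HPi adjmx_inv PcH. Qed.
Let TH : adjmx T = Pc *m Lc.
Proof. by rewrite adjmxM LcH PcH. Qed.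
Let LLi : Lc *m Li = 1%:M. Proof. by rewrite HLi mulmxV. Qed.
Let LiL : Li *m Lc = 1%:M. Proof. by rewrite HLi mulVmx. Qed.
Let PPi : Pc *m Pi = 1%:M. Proof. by rewrite HPi mulmxV. Qed.
Let PiP : Pi *m Pc = 1%:M. Proof. by rewrite HPi mulVmx. Qed.

Let TQ : T *m Q = Pi.
Proof. by rewrite !mulmxA -(mulmxA Lc Pc Pi) PPi mulmx1 LLi mul1mx. Qed.
Let QT : Q *m adjmx T = Pi.
Proof. by rewrite TH !mulmxA -(mulmxA _ Pi Pc) PiP mulmx1 -(mulmxA _ Li Lc) LiL mulmx1. Qed.
Let TQT : T *m Q *m adjmx T = Lc.
Proof. by rewrite TQ TH mulmxA PiP mul1mx. Qed.
Let TP : T *m Pi = Lc.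
Proof. by rewrite -mulmxA PPi mulmx1. Qed.
Let PT : Pi *m adjmx T = Lc.
Proof. by rewrite TH mulmxA PiP mul1mx. Qed.
Let TPT : T *m Pi *m adjmx T = Lc *m Pc *m Lc.
Proof. by rewrite TP TH mulmxA. Qed.

Let Q_psd : Q = (Pi *m Li *m Ac) *m adjmx (Pi *m Li *m Ac).
Proof.
rewrite !adjmxM LiH PiH !mulmxA -(mulmxA _ Ac) -HLc.
by rewrite -(mulmxA _ Lc) LLi mulmx1.
Qed.
Let Pi_psd : Pi = (Pi *m Rc) *m adjmx (Pi *m Rc).
Proof. by rewrite adjmxM PiH mulmxA -(mulmxA Pi Rc) -HPc PiP mul1mx. Qed.
Let LPL_psd : Lc *m Pc *m Lc = (Lc *m Rc) *m adjmx (Lc *m Rc).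
Proof. by rewrite adjmxM LcH HPc !mulmxA. Qed.
Let Nc_psd : Nc = (adjmx Rc *m (Pi *m Li *m Ac)) *m adjmx (adjmx Rc *m (Pi *m Li *m Ac)).
Proof. by rewrite [in RHS]adjmxM adjmxK {1}Q_psd !mulmxA. Qed.

Local Notation K s := (s *: 1%:M + r *: T).

Let KPi s : s + (s^*)%C = 0 ->
  K s *m Pi *m adjmx (K s) = (s * (s^*)%C) *: Pi + (r * r) *: (Lc *m Pc *m Lc).
Proof. by move=> ss; exact: (KQK rr ss TP PT TPT). Qed.
Let KQ s : s + (s^*)%C = 0 ->
  K s *m Q *m adjmx (K s) = (s * (s^*)%C) *: Q + (r * r) *: Lc.
Proof. by move=> ss; exact: (KQK rr ss TQ QT TQT). Qed.

Local Notation Sg s := (adjmx Rc *m invmx (K s) *m Bc).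

Lemma Kunit s : s + (s^*)%C = 0 -> K s \in unitmx.
Proof.
move=> ss; rewrite -row_free_unit; apply: ker_row_free => v Hv.
have H0 : qf v (K s *m Pi *m adjmx (K s)) = 0.
  by rewrite /qf !mulmxA Hv !mul0mx mxE.
move: H0; rewrite KPi // qfD !qfZ.
have h1 : 0 <= s * (s^*)%C * qf v Pi.
  by rewrite mulr_ge0 ?mul_conjC_ge0 // Pi_psd qf_psd_ge0.
have h2 : 0 <= r * r * qf v (Lc *m Pc *m Lc).
  by apply: mulr_ge0; [apply: mulr_ge0; exact: ltW | rewrite LPL_psd qf_psd_ge0].
move/eqP; rewrite paddr_eq0 // => /andP [_ /eqP].
move/eqP; rewrite !mulf_eq0 (gt_eqF r0) /= LPL_psd qf_psd => /eqP /nrm_eq0 /eqP.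
rewrite mulmxA mulmx_free_eq0 // => /eqP vL.
by rewrite -[v]mulmx1 -LLi mulmxA vL mul0mx.
Qed.

Let aux (x rr' e t : C) : 0 <= x -> 0 < rr' -> 0 <= e ->
  x * t <= x / rr' * (e + rr' * t).
Proof.
move=> x0 r0' e0; rewrite mulrDr (mulrA _ rr') divfK ?gt_eqF // lerDr.
by rewrite mulr_ge0 // divr_ge0 // ltW.
Qed.

Lemma Sig_bound s (w : 'rV[C]_m) : s + (s^*)%C = 0 ->
  qf w (Sg s *m adjmx (Sg s)) <= sw2 / (r * r) * qf w Nc + c2 / (r * r) * qf w Pm.
Proof.
move=> ss.
have uK := Kunit ss.
have E : Sg s *m adjmx (Sg s) = (adjmx Rc *m invmx (K s)) *m (Bc *m adjmx Bc)
    *m adjmx (adjmx Rc *m invmx (K s)) by rewrite adjmxM !mulmxA.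
rewrite E -qfM cBB qfD !qfZ mulmxA.
set y := w *m adjmx Rc *m invmx (K s).
have Hz : y *m K s = w *m adjmx Rc by rewrite /y mulmxKV.
clearbody y.
have -> : qf w Nc = qf (w *m adjmx Rc) Q by rewrite qfM adjmxK.
have -> : qf w Pm = qf (w *m adjmx Rc) Pi by rewrite qfM adjmxK.
rewrite -Hz qfM KQ // qfM KPi // !qfD !qfZ.
have rr0 : 0 < r * r by rewrite mulr_gt0.
apply: lerD; apply: aux => //; rewrite mulr_ge0 ?mul_conjC_ge0 //.
  by rewrite Q_psd qf_psd_ge0.
by rewrite Pi_psd qf_psd_ge0.
Qed.

Let PmH : adjmx Pm = Pm.
Proof. by rewrite !adjmxM adjmxK PiH mulmxA. Qed.
Let PmPm : Pm *m Pm = Pm.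
Proof.
rewrite !mulmxA -(mulmxA _ Rc (adjmx Rc)) -HPc -(mulmxA _ Pc Pi) PPi mulmx1.
by [].
Qed.

Lemma Pm_le (w : 'rV[C]_m) : qf w Pm <= nrm w.
Proof.
have E : 1%:M - Pm = (1%:M - Pm) *m adjmx (1%:M - Pm).
  rewrite adjmxD adjmxN adjmx1 PmH mulmxBl !mul1mx mulmxBr mulmx1 PmPm.
  by rewrite subrr subr0.
have : 0 <= qf w (1%:M - Pm) by rewrite E qf_psd_ge0.
by rewrite qfD qfN qf1 subr_ge0.
Qed.

Let NcPm : Nc *m Pm = Nc.
Proof.
rewrite !mulmxA -(mulmxA _ Rc (adjmx Rc)) -HPc -(mulmxA _ Pc Pi) PPi mulmx1.
by [].
Qed.

Lemma Sig0 : Sg 0 *m adjmx (Sg 0) = (sw2 / (r * r)) *: Nc + (c2 / (r * r)) *: Pm.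
Proof.
have uK := Kunit (s:=0); rewrite conjc0 addr0 in uK; have {}uK := uK erefl.
rewrite scale0r add0r in uK.
have uT : T \in unitmx by rewrite unitmxZ ?unitfE ?gt_eqF // in uK.
have Ki : invmx (r *: T) = r^-1 *: (Pi *m Li).
  by rewrite invmxZ // invmxM2 // HPi HLi.
have E : Sg 0 *m adjmx (Sg 0) = (adjmx Rc *m invmx (r *: T)) *m (Bc *m adjmx Bc)
    *m adjmx (adjmx Rc *m invmx (r *: T)).
  by rewrite scale0r add0r adjmxM !mulmxA.
rewrite E Ki cBB -scalemxAr adjmxZ conjc_inv rr -scalemxAl -scalemxAr.
rewrite -scalemxAl scalerA mulmxDr mulmxDl -!scalemxAr -!scalemxAl scalerDr !scalerA.
rewrite !adjmxM LiH PiH adjmxK.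
have E1 : adjmx Rc *m (Pi *m Li) *m Lc *m (Li *m Pi *m Rc) = Nc.
  by rewrite !mulmxA -(mulmxA _ Li Lc) LiL mulmx1.
have E2 : adjmx Rc *m (Pi *m Li) *m (Lc *m Pc *m Lc) *m (Li *m Pi *m Rc) = Pm.
  rewrite !mulmxA -(mulmxA _ Li Lc) LiL mulmx1 -(mulmxA _ Lc Li) LLi mulmx1.
  by rewrite -(mulmxA _ Pi Pc) PiP mulmx1.
rewrite E1 E2 invfM; congr (_ *: _ + _ *: _).
  by rewrite mulrC mulrA.
by rewrite mulrC mulrA.
Qed.

Let NcH : adjmx Nc = Nc.
Proof. by rewrite Nc_psd adjmxM adjmxK. Qed.

Let m0 : (0 < m)%N.
Proof.
move: fRc; rewrite /row_free => /eqP H; have := rank_leq_col Rc.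
by rewrite H; apply: leq_trans.
Qed.

Let diag_mul n (a b : 'rV[C]_n) :
  diag_mx a *m diag_mx b = diag_mx (\row_j (a 0 j * b 0 j)).
Proof.
apply/matrixP => i j; rewrite mul_diag_mx !mxE.
by case: eqP => [->|_]; rewrite ?mulr1n ?mulr0n ?mulr0.
Qed.

Theorem core (Vr : R) :
  (forall om : R, K (0 +i* om)%C \in unitmx) /\
  ((Vr%:C)%C = sw2 / (r * r) * ((sigma_max Nc)%:C)%C + c2 / (r * r) ->
  has_sup (hinf_set (fun s => Sg s)) /\ hinf_norm (fun s => Sg s) ^+ 2 = Vr).
Proof.
split; first by move=> om; apply: Kunit; exact: ss0.
have [P [d [PPH PHP NcE]]] := herm_spec NcH.
have d_ge0 : forall i, 0 <= d 0 i.
  move=> i; have [Hv vnz] := spec_vec d PPH i.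
  rewrite -NcE in Hv; have := eigen_qf Hv.
  have : 0 <= qf (row i P) Nc by rewrite Nc_psd qf_psd_ge0.
  rewrite /qf => H1 H2; rewrite H2 in H1.
  by move: H1; rewrite pmulr_lge0 ?nrm_gt0 // ler0c.
pose i1 := Ordinal m0.
case: (@arg_maxP _ _ _ i1 predT (fun i => d 0 i) isT) => i0 _ Hi0.
pose lam := d 0 i0.
have lam_ge : forall j, d 0 j <= lam by move=> j; exact: Hi0.
have lam0 : 0 <= lam by exact: d_ge0.
have sigN : sigma_max Nc = lam.
  pose d2 := \row_j (d 0 j ^+ 2).
  have E : adjmx Nc *m Nc = adjmx P *m diag_mx (cmx d2) *m P.
    rewrite NcH {1}NcE {1}NcE !mulmxA -(mulmxA _ P (adjmx P)) PPH mulmx1.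
    rewrite -(mulmxA (adjmx P)) diag_mul; congr (_ *m diag_mx _ *m _).
    by apply/rowP => j; rewrite !mxE rmorphXn expr2.
  rewrite /sigma_max E (@sup_max_eq _ _ (lam ^+ 2)).
  - by rewrite sqrtr_sqr ger0_norm.
  - move=> x /(spec_eig PPH PHP) [j ->]; rewrite mxE.
    by rewrite lerXn2r ?nnegrE ?d_ge0.
  - by move=> x /(spec_eig PPH PHP) [j ->]; rewrite mxE sqr_ge0.
  - left; apply/eigenvalueP; have [H1 H2] := spec_vec d2 PPH i0.
    by exists (row i0 P); rewrite // H1 mxE.
rewrite sigN => HV.
set a := sw2 / (r * r) in HV *; set b := c2 / (r * r) in HV *.
have rr0 : 0 < r * r by rewrite mulr_gt0.
have a0 : 0 <= a by rewrite divr_ge0 // ltW.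
have b0 : 0 <= b by rewrite divr_ge0 // ltW.
have V0 : 0 <= Vr by rewrite -ler0c HV addr_ge0 // mulr_ge0 // ler0c.
have qbound : forall s, s + (s^*)%C = 0 -> forall w : 'rV_m,
    (w *m (Sg s *m adjmx (Sg s)) *m adjmx w) 0 0 <= (Vr%:C)%C * nrm w.
  move=> s ss w; have := Sig_bound w ss; rewrite -/a -/b => H.
  apply: (le_trans H).
  rewrite HV mulrDl -[a * _ * _]mulrA; apply: lerD.
    by apply: (ler_wpM2l a0); rewrite NcE; exact: (spec_qf PHP w lam_ge).
  exact: (ler_wpM2l b0 (Pm_le w)).
have fb : forall om, sigma_max (Sg (0 +i* om)%C) <= Num.sqrt Vr.
  move=> om; rewrite /sigma_max; apply: ler_wsqrtr; apply: sup_le_ub0 => // x Hx.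
  exact: (AHA_eig_bound (qbound _ (ss0 om)) V0 Hx).
have f0 : sigma_max (Sg (0 +i* 0)%C) = Num.sqrt Vr.
  have -> : (0 +i* 0)%C = 0 :> C by [].
  have ss : (0 : C) + ((0 : C)^*)%C = 0 by rewrite conjc0 addr0.
  rewrite /sigma_max (@sup_max_eq _ _ Vr) //.
  - by move=> x Hx; exact: (AHA_eig_bound (qbound 0 ss) V0 Hx).
  - by move=> x; exact: AHA_eig_ge0.
  have [->|Vnz] := eqVneq Vr 0; [by right | left].
  have [w [wnz wN wP]] : exists w : 'rV[C]_m,
      [/\ w != 0, w *m Nc = ((lam%:C)%C) *: w & w *m Pm = w].
    have [l0|lnz] := eqVneq lam 0.
      have d0 : cmx d = 0.
        apply/rowP => j; rewrite !mxE; apply/eqP; rewrite eq_complex /= eqxx andbT.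
        by rewrite eq_le d_ge0 andbT -l0 lam_ge.
      have Nc0 : Nc = 0.
        rewrite NcE d0 (_ : diag_mx 0 = 0) ?mulmx0 ?mul0mx //.
        by apply/matrixP => i j; rewrite !mxE mul0rn.
      exists (delta_mx 0 (Ordinal k0) *m Rc); split.
      - rewrite mulmx_free_eq0 //; apply/eqP => /matrixP /(_ 0 (Ordinal k0)).
        by rewrite !mxE !eqxx => /eqP; rewrite oner_eq0.
      - by rewrite Nc0 mulmx0 l0 rmorph0 scale0r.
      - rewrite !mulmxA -(mulmxA _ Rc (adjmx Rc)) -HPc -(mulmxA _ Pc Pi) PPi mulmx1.
        by [].
    have [Hv vnz] := spec_vec d PPH i0; rewrite -NcE in Hv.
    have lC : (lam%:C)%C != 0 :> C by rewrite eq_complex /= eqxx andbT.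
    have ew : row i0 P = ((lam%:C)%C)^-1 *: (row i0 P *m Nc).
      by rewrite Hv scalerA mulVf ?scale1r.
    exists (row i0 P); split => //.
    by rewrite [in LHS]ew -scalemxAl -mulmxA NcPm -ew.
  apply: (AHA_eig_attain wnz _ Vnz).
  by rewrite Sig0 mulmxDr -!scalemxAr wN wP scalerA -scalerDl HV.
have ub : forall y, hinf_set (fun s => Sg s) y -> y <= Num.sqrt Vr.
  by move=> y [om _ <-]; exact: fb.
have inS : hinf_set (fun s => Sg s) (Num.sqrt Vr) by exists 0.
split.
  by split; [exists (Num.sqrt Vr) | exists (Num.sqrt Vr); apply/ubP].
rewrite /hinf_norm (@sup_max_eq _ _ (Num.sqrt Vr)) ?sqr_sqrtr //.
- by move=> y [om _ <-]; exact: sqrtr_ge0.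
- by left.
Qed.

End Core.

Lemma sum_ind (R : realType) n (v : 'rV[R]_n) a :
  \sum_i v 0 i * (i == a)%:R = v 0 a.
Proof.
rewrite (bigD1 a) //= eqxx mulr1 big1 ?addr0 // => i /negPf ->.
by rewrite mulr0.
Qed.

Lemma incidence_rank (R : realType) (n nt c : nat) (src tgt : 'I_(nt + c) -> 'I_n) :
  (0 < n)%N -> spanning_tree src tgt ->
  (n <= (\rank (lsubmx (incidence R src tgt) : 'M_(n, nt))).+1)%N.
Proof.
move=> n0 sp.
set Dt := lsubmx _.
have key : forall v : 'rV[R]_n, v *m Dt = 0 -> forall i j, v 0 i = v 0 j.
  move=> v Hv.
  have He : forall l : 'I_nt, v 0 (src (lshift c l)) = v 0 (tgt (lshift c l)).
    move=> l; move/rowP: Hv => /(_ l); rewrite !mxE.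
    under eq_bigr => i _ do rewrite !mxE mulrBr.
    rewrite sumrB => /eqP; rewrite subr_eq0 => /eqP.
    by rewrite !sum_ind.
  have Hr : forall i j, tree_rel src tgt i j -> v 0 i = v 0 j.
    move=> i j /existsP [l /orP [/andP [/eqP <- /eqP <-] | /andP [/eqP <- /eqP <-]]].
      exact: He.
    by rewrite He.
  move=> i j; have /connectP [p Hp ->] := sp i j.
  elim: p i Hp => [|x p IH] i //= /andP [Hix Hp].
  by rewrite (Hr _ _ Hix) IH.
have sub : (kermx Dt <= (const_mx 1 : 'rV[R]_n))%MS.
  apply/row_subP => i.
  have Hv : row i (kermx Dt) *m Dt = 0 by rewrite -row_mul mulmx_ker row0.
  have -> : row i (kermx Dt) = (row i (kermx Dt)) 0 (Ordinal n0) *: const_mx 1.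
    by apply/rowP => j; have := key _ Hv j (Ordinal n0); rewrite !mxE mulr1.
  by rewrite scalemx_sub.
have := mxrankS sub; rewrite mxrank_ker => H.
have H1 := leq_trans H (rank_leq_row _).
move: H1; set z := \rank _; lia.
Qed.

Lemma trZ (R : realType) p q (a : R) (A : 'M[R]_(p,q)) : (a *: A)^T = a *: A^T.
Proof. by apply/matrixP => i j; rewrite !mxE. Qed.

Unset Implicit Arguments.

Theorem corollary1 (R : realType) (n c : nat)
    (src tgt : 'I_(n.-1 + c) -> 'I_n)
    (w : 'I_(n.-1 + c) -> R) (eps : 'I_n -> R) (rho sw sv : R) :
  (2 <= n)%N ->
  (* no self-loops *)
  (forall l, src l != tgt l) ->
  (* edges form a set: no two edges join the same pair of nodes *)
  (forall l l', l != l' ->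
     ~~ (((src l == src l') && (tgt l == tgt l')) ||
         ((src l == tgt l') && (tgt l == src l')))) ->
  (* the first n-1 edges form a spanning tree *)
  spanning_tree src tgt ->
  (forall i, 0 < eps i) ->
  0 < rho ->
  (* W = rho I *)
  (forall l, w l = rho) ->
  let D := incidence R src tgt in
  let Dt : 'M[R]_(n, n.-1) := lsubmx D in
  let Dc : 'M[R]_(n, c) := rsubmx D in
  let Ttc := invmx (Dt^T *m Dt) *m Dt^T *m Dc in
  let Rm : 'M[R]_(n.-1, n.-1 + c) := row_mx 1%:M Ttc in
  let W := diagv w in
  let Wh := diagv (fun l => Num.sqrt (w l)) in
  let Einv := diagv (fun i => (eps i)^-1) in
  let Einvh := diagv (fun i => (Num.sqrt (eps i))^-1) in
  let L := Dt^T *m Einv *m Dt in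
  let M := L *m Rm *m W *m Rm^T in
  let B : 'M[R]_(n.-1, n + (n.-1 + c)) :=
    row_mx (sw *: (Dt^T *m Einvh)) (- sv *: (L *m Rm *m Wh)) in
  let Sigma := fun s : R[i] =>
    cmx Rm^T *m invmx (s *: 1%:M + cmx M) *m cmx B in
  (forall om : R, (((0 +i* om)%C : R[i]) *: 1%:M + cmx M) \in unitmx) /\
  has_sup (hinf_set Sigma) /\
  hinf_norm Sigma ^+ 2 =
    rho^-2 * sw ^+ 2 *
      sigma_max (cmx (Rm^T *m invmx (Rm *m Rm^T *m L *m Rm *m Rm^T) *m Rm))
    + rho^-1 * sv ^+ 2.

Proof.
move=> n2 noloop simple sp eps0 rho0 wE D Dt Dc Ttc Rm W Wh Einv Einvh L M B Sigma.
have n0 : (0 < n)%N by apply: leq_trans n2.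
have k0 : (0 < n.-1)%N by rewrite -subn1 subn_gt0.
pose Eh := diagv (fun i => Num.sqrt (eps i)).
have EhE : Einvh *m Eh = 1%:M.
  apply/matrixP => i j; rewrite mul_diag_mx !mxE.
  case: eqP => [->|_]; rewrite ?mulr1n ?mulr0n ?mulr0 // mulVf //.
  by rewrite gt_eqF // sqrtr_gt0.
have EE : Einvh *m Einvh^T = Einv.
  apply/matrixP => i j; rewrite tr_diag_mx mul_diag_mx !mxE.
  case: eqP => [->|_]; rewrite ?mulr1n ?mulr0n ?mulr0 //.
  by rewrite -invfM -expr2 sqr_sqrtr // ltW.
have W_E : W = rho%:M by apply/matrixP => i j; rewrite !mxE wE.
have Wh_E : Wh = (Num.sqrt rho)%:M by apply/matrixP => i j; rewrite !mxE wE.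
have LT : L^T = L by rewrite /L !trmx_mul trmxK tr_diag_mx mulmxA.
pose A := Dt^T *m Einvh.
have HL : L = A *m A^T by rewrite /A trmx_mul trmxK !mulmxA -(mulmxA _ Einvh) EE.
have HB : B *m B^T = sw ^+ 2 *: L + (sv ^+ 2 * rho) *: (L *m (Rm *m Rm^T) *m L).
  rewrite /B tr_row_mx mul_row_col !trZ -!scalemxAl -!scalemxAr !scalerA.
  rewrite -/A -HL mulrNN -!expr2; congr (_ + _).
  rewrite [(L *m Rm *m Wh)^T]trmx_mul [(L *m Rm)^T]trmx_mul.
  rewrite LT Wh_E tr_scalar_mx !mulmxA !mul_mx_scalar -!scalemxAl !scalerA.
  by congr (_ *: _); rewrite -expr2 sqr_sqrtr ?ltW.
have ME : M = rho *: (L *m (Rm *m Rm^T)).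
  by rewrite /M W_E mul_mx_scalar -scalemxAl !mulmxA.
clearbody L.
set Ac := cmx A.
set Rc := cmx Rm.
set Lc := cmx L.
set r : R[i] := (rho%:C)%C.
have rDt : row_free Dt^T.
  have h : (n <= (\rank Dt).+1)%N by exact: (incidence_rank R n0 sp).
  have h1 : (\rank Dt <= n.-1)%N by exact: rank_leq_col.
  have h2 : \rank Dt = n.-1.
    by apply/eqP; rewrite eqn_leq h1 /= -ltnS (leq_trans _ h) // prednK.
  by rewrite /row_free mxrank_tr h2.
have fA : row_free A.
  have uE : Einvh \in unitmx by case: (mulmx1_unit EhE).
  by rewrite /row_free /A mxrankMfree ?row_free_unit //.
have fAc : row_free Ac by rewrite /row_free mxrank_map.
have fRc : row_free Rc.
  apply: ker_row_free => v; rewrite /Rc /cmx /Rm map_row_mx map_mx1 mul_mx_row mulmx1.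
  by rewrite -row_mx0 => /eq_row_mx [].
have HLc : Lc = Ac *m adjmx Ac by rewrite /Lc /Ac HL cmxM adjmx_cmx.
have cBB : cmx B *m adjmx (cmx B) = ((sw ^+ 2)%:C)%C *: Lc +
    ((sv ^+ 2 * rho)%:C)%C *: (Lc *m (Rc *m adjmx Rc) *m Lc).
  by rewrite adjmx_cmx -cmxM HB cmxD !cmxZ !cmxM /Rc adjmx_cmx.
have rr : ((r)^*)%C = r by exact: conjc_real.
have r0 : 0 < r by rewrite ltcR.
have sw0 : 0 <= ((sw ^+ 2)%:C)%C :> R[i] by rewrite ler0c sqr_ge0.
have c0 : 0 <= ((sv ^+ 2 * rho)%:C)%C :> R[i] by rewrite ler0c mulr_ge0 ?sqr_ge0 // ltW.
have uL : Lc \in unitmx by rewrite HLc XXH_unit.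
have uP : Rc *m adjmx Rc \in unitmx by rewrite XXH_unit.
have HcM : cmx M = r *: (Lc *m (Rc *m adjmx Rc)).
  by rewrite ME cmxZ !cmxM /Rc adjmx_cmx.
have HSig : Sigma = (fun s => adjmx Rc *m invmx (s *: 1%:M + r *: (Lc *m (Rc *m adjmx Rc))) *m cmx B).
  by rewrite /Sigma HcM /Rc adjmx_cmx.
have HN : cmx (Rm^T *m invmx (Rm *m Rm^T *m L *m Rm *m Rm^T) *m Rm) =
    adjmx Rc *m (invmx (Rc *m adjmx Rc) *m invmx Lc *m invmx (Rc *m adjmx Rc)) *m Rc.
  rewrite !cmxM cmx_inv !cmxM -/Rc -/Lc -adjmx_cmx -/Rc -(mulmxA _ Rc).
  by rewrite invmxM2 ?unitmx_mul ?uP ?uL // invmxM2 // mulmxA.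
set Vr := rho^-2 * sw ^+ 2 * _ + _.
have [C1 C2] := core k0 fAc fRc rr r0 sw0 c0 HLc erefl erefl erefl cBB Vr.
split.
  by move=> om; rewrite HcM; exact: C1.
rewrite HSig; apply: C2.
rewrite /Vr HN rmorphD !rmorphM fmorphV rmorphXn /r.
set S := ((sigma_max _)%:C)%C.
field.
by rewrite -/r gt_eqF.
Qed.
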